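(* Suppose $\Phi$ is of affine type, $c$ is a Coxeter element, and $\beta$ is a root contained in $U_c$. Then $E_c(\beta^\vee,\delta)=E_c(\delta^\vee,\beta)=0$.
   Context: $A=[a_{ij}]_{1\le i,j\le n}$ is a symmetrizable Cartan matrix of affine type with symmetrizing constants $d_i$; $V$ has basis of simple roots $\alpha_1,\dots,\alpha_n$, simple co-roots $\alpha_i^\vee=d_i^{-1}\alpha_i$, and symmetric bilinear form $K$ with $K(\alpha_i^\vee,\alpha_j)=a_{ij}$; $W$ is generated by $s_i(v)=v-K(\alpha_i^\vee,v)\alpha_i$. $\Phi$ is the root system; its imaginary roots are the nonzero integer multiples of $\delta$, the positive imaginary root closest to $0$. For a real root $\beta$, $\beta^\vee=\frac2{K(\beta,\beta)}\beta$; $\delta^\vee$ is the positive imaginary root closest to $0$ in the dual root system (Cartan matrix $A^T$), a positive multiple of $\delta$ (and $\beta^\vee$ means $\delta^\vee$ when $\beta=\delta$). A Coxeter element $c$ is indexed as $c=s_1\cdots s_n$; $E_c$ is the bilinear form on $V$ with $E_c(\alpha_i^\vee,\alpha_j)=a_{ij}$ if $i>j$, $1$ if $i=j$, $0$ if $i<j$. With $\alpha_{\mathrm{aff}}$ the affine simple root and $V_{\mathrm{fin}}$ the span of the other simple roots, $\gamma_c$ is the unique vector of $V_{\mathrm{fin}}$ with $c\gamma_c=\gamma_c+\delta$, and $U_c=\{v\in V:K(\gamma_c,v)=0\}$. *)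

(* Defs.v *)
From HB Require Import structures.
From mathcomp Require Import all_boot all_order all_algebra.
Set Implicit Arguments. Unset Strict Implicit. Unset Printing Implicit Defensive.
Import Order.TTheory GRing.Theory Num.Theory.
Local Open Scope ring_scope.

(* Vectors of V are column vectors of coordinates w.r.t. the simple roots
   alpha_1..alpha_n (indexed by 'I_n), over the rationals. *)

Definition Ar (n : nat) (A : 'M[int]_n) : 'M[rat]_n := map_mx (fun z : int => z%:~R) A.

Definition sroot (n : nat) (j : 'I_n) : 'cV[rat]_n := delta_mx j 0.

Definition is_GCM (n : nat) (A : 'M[int]_n) : Prop :=
  (forall i, A i i = 2) /\
  (forall i j, i != j -> A i j <= 0) /\
  (forall i j, A i j = 0 <-> A j i = 0).

Definition indecomposable (n : nat) (A : 'M[int]_n) : Prop :=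
  forall S : {set 'I_n}, S != set0 -> S != setT ->
    exists i j, [/\ i \in S, j \notin S & A i j != 0].

(* Kac, Infinite-dimensional Lie algebras, Thm 4.3 (Aff) *)
Definition affine_type (n : nat) (A : 'M[int]_n) : Prop :=
  [/\ is_GCM A, indecomposable A,
      \rank (Ar A) = n.-1,
      (exists u : 'cV[rat]_n, (forall i, 0 < u i 0) /\ Ar A *m u = 0)
    & (forall v : 'cV[rat]_n, (forall i, 0 <= (Ar A *m v) i 0) -> Ar A *m v = 0)].

Definition symmetrizing (n : nat) (A : 'M[int]_n) (d : 'I_n -> rat) : Prop :=
  (forall i, 0 < d i) /\ (forall i j, d i * (A i j)%:~R = d j * (A j i)%:~R).

(* K(x,y), with K(alpha_i, alpha_j) = d_i a_ij, i.e. K(alpha_i^vee, alpha_j) = a_ij *)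
Definition Kform (n : nat) (A : 'M[int]_n) (d : 'I_n -> rat) (x y : 'cV[rat]_n) : rat :=
  \sum_i \sum_j x i 0 * y j 0 * d i * (A i j)%:~R.

(* s_i(v) = v - K(alpha_i^vee, v) alpha_i *)
Definition refl (n : nat) (A : 'M[int]_n) (i : 'I_n) (v : 'cV[rat]_n) : 'cV[rat]_n :=
  v - (\sum_j (A i j)%:~R * v j 0) *: sroot i.

Definition wact (n : nat) (A : 'M[int]_n) (w : seq 'I_n) (v : 'cV[rat]_n) : 'cV[rat]_n :=
  foldr (refl A) v w.

Definition coxeter (n : nat) (A : 'M[int]_n) (v : 'cV[rat]_n) : 'cV[rat]_n :=
  wact A (enum 'I_n) v.

Definition is_int (x : rat) : Prop := exists z : int, x = z%:~R.

(* delta = positive imaginary root closest to 0: the smallest positive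
   integral vector in the kernel of A *)
Definition is_delta (n : nat) (A : 'M[int]_n) (delta : 'cV[rat]_n) : Prop :=
  [/\ forall i, 0 < delta i 0, forall i, is_int (delta i 0), Ar A *m delta = 0
    & forall u : 'cV[rat]_n, (forall i, 0 < u i 0) -> (forall i, is_int (u i 0)) ->
        Ar A *m u = 0 -> forall i, delta i 0 <= u i 0].

(* delta^vee expressed in V: if b is the delta of the dual system (Cartan
   matrix A^T, simple roots alpha_i^vee = d_i^{-1} alpha_i), then
   delta^vee = sum_i b_i alpha_i^vee. *)
Definition dual_delta (n : nat) (d : 'I_n -> rat) (b : 'cV[rat]_n) : 'cV[rat]_n :=
  \col_i (b i 0 / d i).

Definition real_root (n : nat) (A : 'M[int]_n) (beta : 'cV[rat]_n) : Prop :=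
  exists (w : seq 'I_n) (j : 'I_n), beta = wact A w (sroot j).

Definition imag_root (n : nat) (delta beta : 'cV[rat]_n) : Prop :=
  exists k : int, k != 0 /\ beta = k%:~R *: delta.

Definition is_root (n : nat) (A : 'M[int]_n) (delta beta : 'cV[rat]_n) : Prop :=
  real_root A beta \/ imag_root delta beta.

Definition coroot_of (n : nat) (A : 'M[int]_n) (d : 'I_n -> rat)
    (delta deltav beta betav : 'cV[rat]_n) : Prop :=
  (real_root A beta /\ betav = (2 / Kform A d beta beta) *: beta) \/
  (exists k : int, [/\ k != 0, beta = k%:~R *: delta & betav = k%:~R *: deltav]).

Definition Ecoef (n : nat) (A : 'M[int]_n) (i j : 'I_n) : rat :=
  if (j < i)%N then (A i j)%:~R else if i == j then 1 else 0.

Definition Ec (n : nat) (A : 'M[int]_n) (d : 'I_n -> rat) (x y : 'cV[rat]_n) : rat :=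
  \sum_i \sum_j x i 0 * y j 0 * d i * Ecoef A i j.

(* Main.v *)
Require Import Defs.
From HB Require Import structures.
From mathcomp Require Import all_boot all_order all_algebra ring.
Import Order.TTheory GRing.Theory Num.Theory.
Local Open Scope ring_scope.
Set Implicit Arguments. Unset Strict Implicit.

Section S.
Variables (n : nat) (A : 'M[int]_n) (d : 'I_n -> rat).
Hypothesis sym : symmetrizing A d.
Hypothesis GCM : is_GCM A.

Definition Ecol (f : 'I_n -> rat) (i : 'I_n) := \sum_j f j * d j * Ecoef A j i.
Definition Kcol (f : 'I_n -> rat) (i : 'I_n) := \sum_j f j * d j * (A j i)%:~R.

Lemma sum_delta (k : 'I_n) (F : 'I_n -> rat) : \sum_j (j == k)%:R * F j = F k.
Proof.
rewrite (bigD1 k) //= eqxx mul1r big1 ?addr0 // => j /negbTE ->; by rewrite mul0r.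
Qed.

Lemma refl_entry k (y : 'cV[rat]_n) j :
  refl A k y j 0 = y j 0 - (\sum_l (A k l)%:~R * y l 0) * (j == k)%:R.
Proof. by rewrite /refl /sroot !mxE eqxx andbT. Qed.

Lemma wact_key (s : seq 'I_n) : sorted (fun i j : 'I_n => (i < j)%N) s ->
  forall x : 'cV[rat]_n,
  (forall j, j \notin s -> x j 0 - wact A s x j 0 = 0) /\
  (forall i, i \in s -> Ecol (fun j => x j 0 - wact A s x j 0) i = Kcol (fun j => x j 0) i).
Proof.
elim: s => [|k s IH] /= Hs x.
  by split=> // j _; rewrite subrr.
have [Hall Hs'] : all (fun j : 'I_n => (k < j)%N) s /\ sorted (fun i j : 'I_n => (i < j)%N) s.
  by apply/andP; rewrite -path_sortedE //; move=> a b c /= ; apply: ltn_trans.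
have [IH1 IH2] := IH Hs' x.
set y := wact A s x.
set c := \sum_l (A k l)%:~R * y l 0.
have Eu : forall j, x j 0 - refl A k y j 0 = (x j 0 - y j 0) + c * (j == k)%:R.
  by move=> j; rewrite refl_entry -/c opprB addrA addrAC.
have kns : k \notin s.
  by apply/negP => /(allP Hall) /=; rewrite ltnn.
split.
  move=> j; rewrite inE negb_or => /andP [jk js].
  by rewrite Eu IH1 // (negbTE jk) mulr0 addr0.
have EcolE : forall i, Ecol (fun j => x j 0 - refl A k y j 0) i =
   Ecol (fun j => x j 0 - y j 0) i + c * d k * Ecoef A k i.
  move=> i; rewrite /Ecol.
  under eq_bigr => j _ do rewrite Eu mulrDl mulrDl.
  rewrite big_split /=; congr (_ + _).
  under eq_bigr => j _ do rewrite (mulrC c) -!mulrA.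
  by rewrite sum_delta !mulrA.
move=> i; rewrite inE => /orP [/eqP -> | iS].
  rewrite EcolE /Ecoef ltnn eqxx mulr1.
  have -> : Ecol (fun j => x j 0 - y j 0) k = Kcol (fun j => x j 0 - y j 0) k.
    apply: eq_bigr => j _.
    case: (boolP (j \in s)) => js; last by rewrite IH1 // !mul0r.
    by rewrite /Ecoef (allP Hall j js).
  have -> : c * d k = Kcol (fun j => y j 0) k.
    rewrite /c /Kcol mulr_suml; apply: eq_bigr => j _.
    have := (proj2 sym) k j; move=> h.
    have h2 : d j * (A j k)%:~R = d k * (A k j)%:~R by rewrite -h.
    by rewrite -[RHS]mulrA h2; ring.
  rewrite /Kcol -big_split /=; apply: eq_bigr => j _; ring.
rewrite EcolE IH2 //.
have ki := allP Hall i iS.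
rewrite /Ecoef.
have -> : (i < k)%N = false by rewrite ltnNge ltnW.
have -> : (k == i) = false by apply/negbTE; rewrite neq_ltn ki.
by rewrite mulr0 addr0.
Qed.

Lemma sorted_enum_ord : sorted (fun i j : 'I_n => (i < j)%N) (enum 'I_n).
Proof. by have := iota_ltn_sorted 0 n; rewrite -val_enum_ord sorted_map. Qed.

Lemma Ec_colE (x y : 'cV[rat]_n) : Ec A d x y = \sum_j y j 0 * Ecol (fun i => x i 0) j.
Proof.
rewrite /Ec exchange_big; apply: eq_bigr => j _; rewrite /Ecol mulr_sumr.
by apply: eq_bigr => i _; ring.
Qed.

Lemma K_colE (x y : 'cV[rat]_n) : Kform A d x y = \sum_j y j 0 * Kcol (fun i => x i 0) j.
Proof.
rewrite /Kform exchange_big; apply: eq_bigr => j _; rewrite /Kcol mulr_sumr.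
by apply: eq_bigr => i _; ring.
Qed.

Lemma Ec_cox (x y : 'cV[rat]_n) : Ec A d (x - coxeter A x) y = Kform A d x y.
Proof.
rewrite Ec_colE K_colE; apply: eq_bigr => j _; congr (_ * _).
have [_ H] := wact_key sorted_enum_ord x.
rewrite -H ?mem_enum //; apply: eq_bigr => i _; by rewrite !mxE.
Qed.

Lemma Ec_scale a (x y : 'cV[rat]_n) : Ec A d (a *: x) y = a * Ec A d x y.
Proof.
rewrite /Ec mulr_sumr; apply: eq_bigr => i _; rewrite mulr_sumr.
by apply: eq_bigr => j _; rewrite !mxE; ring.
Qed.

Lemma Ec_sym (x y : 'cV[rat]_n) : Ec A d x y + Ec A d y x = Kform A d x y.
Proof.
rewrite /Ec [X in _ + X]exchange_big -big_split /=; apply: eq_bigr => i _.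
rewrite -big_split /=; apply: eq_bigr => j _.
have h := (proj2 sym) i j.
rewrite /Ecoef.
case: (ltngtP i j) => [ij|ji|ij].
- have -> : (i == j) = false by apply/eqP => e; move: ij; rewrite e ltnn.
  rewrite mulr0 add0r.
  have h2 : d j * (A j i)%:~R = d i * (A i j)%:~R by rewrite h.
  by rewrite -[LHS]mulrA h2; ring.
- have -> : (j == i) = false by apply/eqP => e; move: ji; rewrite e ltnn.
  by rewrite mulr0 addr0.
- have e : i = j by apply: val_inj.
  rewrite e eqxx.
  have -> : (A j j)%:~R = 2 :> rat by rewrite (proj1 GCM).
  ring.
Qed.
End S.

Lemma K_ker n (A : 'M[int]_n) d (y v : 'cV[rat]_n) : Ar A *m v = 0 -> Kform A d y v = 0.
Proof.
move=> H; rewrite /Kform big1 // => i _.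
have := congr1 (fun M : 'M[rat]_(n,1) => M i 0) H; rewrite !mxE => Hi.
transitivity (y i 0 * d i * \sum_j Ar A i j * v j 0); last by rewrite Hi mulr0.
by rewrite mulr_sumr; apply: eq_bigr => j _; rewrite /Ar mxE; ring.
Qed.

Lemma dual_ker n (A : 'M[int]_n) d (b : 'cV[rat]_n) : symmetrizing A d ->
  Ar A^T *m b = 0 -> Ar A *m dual_delta d b = 0.
Proof.
move=> [dpos h] H; apply/matrixP => i k; rewrite ord1 !mxE.
have := congr1 (fun M : 'M[rat]_(n,1) => M i 0) H; rewrite !mxE => Hi.
transitivity ((d i)^-1 * \sum_j Ar A^T i j * b j 0); last by rewrite Hi mulr0.
rewrite mulr_sumr; apply: eq_bigr => j _; rewrite /Ar !mxE.
have di : d i != 0 by rewrite gt_eqF.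
have dj : d j != 0 by rewrite gt_eqF.
have h' : (A j i)%:~R = (d j)^-1 * (d i * (A i j)%:~R) :> rat by rewrite h mulKf.
rewrite h'; field; by apply/andP.
Qed.

Lemma ker_mult n (A : 'M[int]_n) (delta v : 'cV[rat]_n) : (0 < n)%N ->
  \rank (Ar A) = n.-1 -> Ar A *m delta = 0 -> delta != 0 -> Ar A *m v = 0 ->
  exists t, v = t *: delta.
Proof.
move=> n0 rkA Hd dn0 Hv.
set M := Ar A in rkA Hd Hv.
have kd : (delta^T <= kermx M^T)%MS by apply/sub_kermxP; rewrite -trmx_mul Hd trmx0.
have kv : (v^T <= kermx M^T)%MS by apply/sub_kermxP; rewrite -trmx_mul Hv trmx0.
have rk : \rank (kermx M^T) = 1%N.
  rewrite mxrank_ker mxrank_tr rkA.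
  have : forall m, (0 < m)%N -> (m - m.-1 = 1)%N by case => // m _; rewrite subSnn.
  by apply.
have rkd : \rank delta^T = 1%N.
  apply/eqP; rewrite eqn_leq rank_leq_row lt0n mxrank_eq0.
  by apply: contra dn0 => /eqP e; rewrite -(trmxK delta) e trmx0.
have : (delta^T == kermx M^T)%MS by rewrite -(mxrank_leqif_eq kd) rk rkd.
case/andP => _ kdd.
have /submxP [D ED] := submx_trans kv kdd.
exists (D 0 0); apply/matrixP => i k; rewrite ord1.
have := congr1 (fun M : 'M[rat]_(1,n) => M 0 i) ED; rewrite !mxE big_ord1 => ->.
by rewrite !mxE.
Qed.

Unset Implicit Arguments.
Theorem proposition2p16 (n : nat) (A : 'M[int]_n) (d : 'I_n -> rat) (aff : 'I_n)
    (delta b gamma beta betav : 'cV[rat]_n) :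
  affine_type A -> symmetrizing A d ->
  is_delta A delta -> is_delta A^T b ->
  (* gamma_c: the vector of V_fin = span{alpha_i : i <> aff} with c gamma = gamma + delta *)
  gamma aff 0 = 0 -> coxeter A gamma = gamma + delta ->
  (* beta is a root lying in U_c, with coroot betav *)
  is_root A delta beta -> Kform A d gamma beta = 0 ->
  coroot_of A d delta (dual_delta d b) beta betav ->
  Ec A d betav delta = 0 /\ Ec A d (dual_delta d b) beta = 0.
Proof.
move=> [GCM _ rkA _ _] sym [dpos _ dker _] [_ _ bker _] _ cox _ HK Hco.
have n0 : (0 < n)%N by apply: leq_ltn_trans (ltn_ord aff).
have dn0 : delta != 0.
  by apply/eqP => e; have := dpos aff; rewrite e mxE ltxx.
have [t ht] := ker_mult n0 rkA dker dn0 (dual_ker sym bker).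
have key : forall y, Ec A d delta y = - Kform A d gamma y.
  move=> y; have := Ec_cox sym gamma y.
  rewrite cox opprD addrA subrr add0r -scaleN1r Ec_scale mulN1r => <-.
  by rewrite opprK.
have second : Ec A d (dual_delta d b) beta = 0.
  by rewrite ht Ec_scale key HK oppr0 mulr0.
split => //.
case: Hco => [[_ ->] | [k [_ eb ->]]].
  rewrite Ec_scale.
  have := Ec_sym sym GCM beta delta.
  rewrite key HK oppr0 addr0 K_ker // => ->.
  by rewrite mulr0.
by rewrite ht !Ec_scale key K_ker // oppr0 !mulr0.
Qed.
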